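(* Consider the general binary observation model: a signal $X\in[0,1]^N$ is drawn from a known prior supported on $[\tau_0,\tau_1]^N$ where $0<\tau_0\le\tau_1<1$; conditionally on $X$, the observations $Y_1,\dots,Y_N\in\{0,1\}$ are independent with $\mathbb{E}[Y_i\mid X]=X_i$; and $x\in\mathbb{R}$ is a (square-integrable) scalar function of $X$ to be estimated. Then for every integer $D\ge0$, \[ \mathrm{Corr}_{\le D}^2 \le \sum_{\alpha\in\{0,1\}^N,\ 0\le|\alpha|\le D} \frac{\kappa_\alpha^2}{(\tau_0(1-\tau_1))^{|\alpha|}}, \] where $\kappa_\alpha$ for $\alpha\in\{0,1\}^N$ is defined recursively by $\kappa_\alpha = \mathbb{E}[xX^\alpha] - \sum_{0\le\beta\lneq\alpha}\kappa_\beta\,\mathbb{E}[X^{\alpha-\beta}]$.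
   Context: For $\alpha\in\{0,1\}^N$: $|\alpha|=\sum_i\alpha_i$, $X^\alpha=\prod_i X_i^{\alpha_i}$; $\beta\le\alpha$ is entrywise; $\beta\lneq\alpha$ means $\beta\le\alpha$, $\beta\ne\alpha$. The degree-$D$ maximum correlation is $\mathrm{Corr}_{\le D} = \sup\{\mathbb{E}[f(Y)x]/\sqrt{\mathbb{E}[f(Y)^2]} : f\in\mathbb{R}[Y]_{\le D},\ \mathbb{E}[f(Y)^2]\ne0\}$, where $\mathbb{R}[Y]_{\le D}$ denotes real polynomials of degree at most $D$ in the coordinates of $Y$, expectations under the joint law of $(x,Y)$. *)

(* Defs.v *)
From HB Require Import structures.
From mathcomp Require Import all_boot all_order all_algebra.
From mathcomp Require Import all_classical all_reals all_analysis.
From mathcomp Require mpoly.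
Set Implicit Arguments. Unset Strict Implicit. Unset Printing Implicit Defensive.
Import Order.TTheory GRing.Theory Num.Theory.
Local Open Scope ring_scope.
Local Open Scope classical_set_scope.

Definition bern_weight (R : realType) (N : nat) (v : 'I_N -> R)
    (y : {ffun 'I_N -> bool}) : R :=
  \prod_i (if y i then v i else 1 - v i).

(* Expectation under the joint law of (omega, Y): omega ~ P, and conditionally
   on omega the Y_i are independent Bernoulli(X_i omega). *)
Definition jointE (d : measure_display) (T : measurableType d) (R : realType)
    (P : probability T R) (N : nat) (X : 'I_N -> T -> R)
    (h : T -> {ffun 'I_N -> bool} -> R) : R :=
  Rintegral P setT
    (fun w => \sum_(y : {ffun 'I_N -> bool}) h w y * bern_weight (fun i => X i w) y).

Definition evalY (R : realType) (N : nat) (f : mpoly.mpoly N R)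
    (y : {ffun 'I_N -> bool}) : R :=
  mpoly.meval (fun i => (y i)%:R) f.

Definition deg_le (R : realType) (N : nat) (f : mpoly.mpoly N R) (D : nat) : bool :=
  all (fun m => (mpoly.mdeg m <= D)%N) (mpoly.msupp f).

Definition Corr_le (d : measure_display) (T : measurableType d) (R : realType)
    (P : probability T R) (N : nat) (X : 'I_N -> T -> R) (x : T -> R)
    (D : nat) : R :=
  sup [set r : R | exists f : mpoly.mpoly N R,
        [/\ deg_le f D,
            jointE P X (fun _ y => evalY f y ^+ 2) != 0 &
            r = jointE P X (fun w y => evalY f y * x w)
                / Num.sqrt (jointE P X (fun _ y => evalY f y ^+ 2))]].

(* X^alpha for alpha encoded as a subset A of 'I_N *)
Definition Xpow (T : Type) (R : realType) (N : nat) (X : 'I_N -> T -> R)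
    (A : {set 'I_N}) (w : T) : R := \prod_(i in A) X i w.

(* kappa_alpha, defined by the recursion
   kappa_A = E[x X^A] - sum_{B proper subset of A} kappa_B E[X^(A\B)],
   computed with fuel (fuel >= #|A| suffices since #|B| < #|A|). *)
Fixpoint kappa_fuel (d : measure_display) (T : measurableType d) (R : realType)
    (P : probability T R) (N : nat) (X : 'I_N -> T -> R) (x : T -> R)
    (n : nat) (A : {set 'I_N}) : R :=
  match n with
  | 0 => Rintegral P setT (fun w => x w * Xpow X A w)
  | n'.+1 => Rintegral P setT (fun w => x w * Xpow X A w)
      - \sum_(B : {set 'I_N} | B \proper A)
          kappa_fuel P X x n' B * Rintegral P setT (Xpow X (A :\: B))
  end.

Definition kappa (d : measure_display) (T : measurableType d) (R : realType)
    (P : probability T R) (N : nat) (X : 'I_N -> T -> R) (x : T -> R)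
    (A : {set 'I_N}) : R :=
  kappa_fuel P X x #|A| A.

(* Main.v *)
Require Import Defs.
From HB Require Import structures.
From mathcomp Require Import all_boot all_order all_algebra.
From mathcomp Require Import all_classical all_reals all_analysis.
From mathcomp Require mpoly.
From mathcomp Require Import measurable_realfun ring lra.
Set Implicit Arguments. Unset Strict Implicit. Unset Printing Implicit Defensive.
Import Order.TTheory GRing.Theory Num.Theory.
Local Open Scope ring_scope.
Local Open Scope classical_set_scope.

Section Alg.
Variables (R : realType) (N : nat).
Implicit Types (v : 'I_N -> R) (y : {ffun 'I_N -> bool}) (A B C J : {set 'I_N}).

Definition mono A y : R := \prod_(i in A) (y i)%:R.
Definition vpow A v : R := \prod_(i in A) v i.
Definition ctr B v y : R := \prod_(i in B) ((y i)%:R - v i).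
Definition gcoef (c : {set 'I_N} -> R) J v : R :=
  \sum_(A : {set 'I_N} | J \subset A) c A * vpow (A :\: J) v.

Lemma sumY_prod (h : 'I_N -> bool -> R) :
  \sum_(y : {ffun 'I_N -> bool}) \prod_i h i (y i) = \prod_i (h i true + h i false).
Proof.
rewrite -bigA_distr_bigA; apply: eq_bigr => i _; by rewrite big_bool.
Qed.

Lemma cond_mono A v :
  \sum_(y : {ffun 'I_N -> bool}) bern_weight v y * mono A y = vpow A v.
Proof.
pose h i (b : bool) := (if b then v i else 1 - v i) *
   (if i \in A then (b%:R : R) else 1).
have E y : bern_weight v y * mono A y = \prod_i h i (y i).
  by rewrite /bern_weight /mono (big_mkcond (fun i => i \in A)) -big_split.
rewrite (eq_bigr _ (fun y _ => E y)) sumY_prod /vpow [RHS]big_mkcond.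
by apply: eq_bigr => i _; rewrite /h; case: (i \in A) => /=; ring.
Qed.

Lemma cond_ctr2 B C v :
  \sum_(y : {ffun 'I_N -> bool}) bern_weight v y * (ctr B v y * ctr C v y) =
  if B == C then \prod_(i in B) (v i * (1 - v i)) else 0.
Proof.
have [<-|neBC] := eqVneq B C.
  pose h i (b : bool) := (if b then v i else 1 - v i) *
   ((if i \in B then (b%:R : R) - v i else 1) *
    (if i \in B then (b%:R : R) - v i else 1)).
  have E y : bern_weight v y * (ctr B v y * ctr B v y) = \prod_i h i (y i).
    by rewrite /bern_weight /ctr (big_mkcond (fun i => i \in B)) -!big_split.
  rewrite (eq_bigr _ (fun y _ => E y)) sumY_prod.
  rewrite [RHS]big_mkcond; apply: eq_bigr => i _ /=.
  by rewrite /h; case: (i \in B) => /=; ring.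
pose h i (b : bool) := (if b then v i else 1 - v i) *
   ((if i \in B then (b%:R : R) - v i else 1) *
    (if i \in C then (b%:R : R) - v i else 1)).
have E y : bern_weight v y * (ctr B v y * ctr C v y) = \prod_i h i (y i).
  by rewrite /bern_weight /ctr (big_mkcond (fun i => i \in B))
    (big_mkcond (fun i => i \in C)) -!big_split.
rewrite (eq_bigr _ (fun y _ => E y)) sumY_prod.
have [i Hi] : exists i, (i \in B) != (i \in C).
  apply/existsP; apply: contraNT neBC => /existsPn H.
  by apply/eqP/setP => i; move: (H i); case: (i \in B); case: (i \in C).
rewrite (bigD1 i) //= /h; move: Hi.
by case: (i \in B); case: (i \in C) => //= _; ring.
Qed.


Lemma expand_mono A v y :
  mono A y = \sum_(J : {set 'I_N} | J \subset A) ctr J v y * vpow (A :\: J) v.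
Proof.
pose F i := if i \in A then (y i)%:R - v i else 0.
pose G i := if i \in A then v i else 1.
have E1 : mono A y = \prod_i (F i + G i).
  rewrite /mono big_mkcond; apply: eq_bigr => i _; rewrite /F /G.
  by case: (i \in A) => //=; ring.
rewrite E1 bigA_distr [RHS]big_mkcond; apply: eq_big => [J|J _].
  by rewrite ?inE.
case: (boolP (J \subset A)) => HJ.
  rewrite /ctr /vpow (big_mkcond (fun i => i \in J))
    (big_mkcond (fun i => i \in A :\: J)) -big_split /=.
  apply: eq_bigr => i _; rewrite !inE /F /G; move: (fintype.subsetP HJ i).
  by case: (i \in J); case: (i \in A) => //= H; rewrite ?mulr1 ?mul1r //;
    have := H isT.
have /fintype.subsetPn [i iJ niA] := HJ.
by rewrite (bigD1 i) //= iJ /F (negbTE niA) mul0r.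
Qed.

Lemma expand_F (c : {set 'I_N} -> R) v y :
  \sum_(A : {set 'I_N}) c A * mono A y =
  \sum_(J : {set 'I_N}) gcoef c J v * ctr J v y.
Proof.
under eq_bigr do rewrite (expand_mono _ v) mulr_sumr.
rewrite (exchange_big_dep xpredT) //=; apply: eq_bigr => J _.
rewrite /gcoef mulr_suml; apply: eq_big => // A _; ring.
Qed.

Lemma cond_F (c : {set 'I_N} -> R) v :
  \sum_(y : {ffun 'I_N -> bool}) bern_weight v y *
     (\sum_(A : {set 'I_N}) c A * mono A y) =
  \sum_(A : {set 'I_N}) c A * vpow A v.
Proof.
under eq_bigr do rewrite mulr_sumr.
rewrite exchange_big; apply: eq_bigr => A _.
rewrite -cond_mono mulr_sumr; apply: eq_bigr => y _; ring.
Qed.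

Lemma cond_F2 (c : {set 'I_N} -> R) v :
  \sum_(y : {ffun 'I_N -> bool}) bern_weight v y *
     (\sum_(A : {set 'I_N}) c A * mono A y) ^+ 2 =
  \sum_(J : {set 'I_N}) gcoef c J v ^+ 2 * \prod_(i in J) (v i * (1 - v i)).
Proof.
have E y : bern_weight v y * (\sum_(A : {set 'I_N}) c A * mono A y) ^+ 2 =
   \sum_(J : {set 'I_N}) \sum_(K : {set 'I_N})
      (gcoef c J v * gcoef c K v) * (bern_weight v y * (ctr J v y * ctr K v y)).
  rewrite (expand_F c v) expr2 big_distrlr mulr_sumr; apply: eq_bigr => J _.
  rewrite mulr_sumr; apply: eq_bigr => K _ /=; ring.
rewrite (eq_bigr _ (fun y _ => E y)) exchange_big; apply: eq_bigr => J _.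
rewrite exchange_big /=.
under eq_bigr do rewrite -mulr_sumr cond_ctr2.
rewrite (bigD1 J) //= eqxx [X in _ + X]big1 ?addr0; first by rewrite expr2.
by move=> K; rewrite eq_sym => /negbTE ->; rewrite mulr0.
Qed.

Lemma lam_bound (tau0 tau1 : R) J v : 0 < tau0 -> tau1 < 1 ->
  (forall i, tau0 <= v i <= tau1) ->
  (tau0 * (1 - tau1)) ^+ #|J| <= \prod_(i in J) (v i * (1 - v i)).
Proof.
move=> h0 h1 hv; rewrite -prodr_const; apply: ler_prod => i _.
have /andP [a b] := hv i; apply/andP; split; nra.
Qed.

Lemma sum_sq_id (I : finType) (P : pred I) (p q w : I -> R) (a c : R) :
  (forall i, P i -> w i != 0) ->
  \sum_(i | P i) w i * (a * q i - c * p i / w i) ^+ 2 =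
  a ^+ 2 * (\sum_(i | P i) w i * q i ^+ 2) + (- (2 * a * c)) * (\sum_(i | P i) p i * q i)
   + c ^+ 2 * (\sum_(i | P i) p i ^+ 2 / w i).
Proof.
move=> hw; rewrite !mulr_sumr -!big_split /=; apply: eq_bigr => i Pi.
by field; apply: hw.
Qed.

Lemma wCS (I : finType) (P : pred I) (p q w : I -> R) :
  (forall i, P i -> 0 < w i) ->
  (\sum_(i | P i) p i * q i) ^+ 2 <=
  (\sum_(i | P i) p i ^+ 2 / w i) * (\sum_(i | P i) w i * q i ^+ 2).
Proof.
move=> hw.
set a := \sum_(i | P i) p i ^+ 2 / w i.
set b := \sum_(i | P i) w i * q i ^+ 2.
set c := \sum_(i | P i) p i * q i.
have hw' : forall i, P i -> w i != 0 by move=> i /hw; rewrite lt0r => /andP[].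
have ha : 0 <= a by apply: sumr_ge0 => i /hw wi; rewrite divr_ge0 // ?sqr_ge0 // ltW.
have key := sum_sq_id p q a c hw'.
have h0 : 0 <= \sum_(i | P i) w i * (a * q i - c * p i / w i) ^+ 2.
  by apply: sumr_ge0 => i /hw wi; rewrite mulr_ge0 // ?sqr_ge0 // ltW.
rewrite key -/a -/b -/c in h0.
have [a0|apos] := eqVneq a 0.
  have hp : forall i, P i -> p i = 0.
    move=> i Pi.
    have hge : forall j, P j -> 0 <= p j ^+ 2 / w j.
      by move=> j /hw wj; rewrite divr_ge0 // ?sqr_ge0 // ltW.
    have := psumr_eq0P hge a0 Pi; move/eqP.
    by rewrite mulf_eq0 invr_eq0 sqrf_eq0 (negbTE (hw' i Pi)) orbF => /eqP.
  have c0 : c = 0 by rewrite /c big1 // => i Pi; rewrite hp // mul0r.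
  by rewrite c0 a0 expr0n /= mul0r.
have a_gt0 : 0 < a by rewrite lt0r apos.
have : 0 <= a * (a * b - c ^+ 2) by nra.
by rewrite pmulr_rge0 // subr_ge0.
Qed.

End Alg.
Arguments mono {R N}.

Local Coercion mpoly.fun_of_multinom : mpoly.multinom >-> Funclass.
Local Close Scope classical_set_scope.
Section Poly.
Variables (R : realType) (N : nat).

Definition cf (f : mpoly.mpoly N R) (A : {set 'I_N}) : R :=
  \sum_(m <- mpoly.msupp f | [set i | m i != 0%N] == A) mpoly.mcoeff m f.

Lemma evalY_cf f (y : {ffun 'I_N -> bool}) :
  evalY f y = \sum_(A : {set 'I_N}) cf f A * mono A y.
Proof.
rewrite /evalY mpoly.mevalE.
under [RHS]eq_bigr do rewrite /cf mulr_suml big_mkcond.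
rewrite [RHS]exchange_big /=; apply: eq_bigr => m _.
rewrite -big_mkcond /=.
rewrite (eq_bigl (fun A => A == [set i | m i != 0%N])); last by move=> A; rewrite eq_sym.
rewrite big_pred1_eq; congr (_ * _).
rewrite /mono [RHS]big_mkcond; apply: eq_bigr => i _; rewrite inE.
case: (m i) => [|k] //=.
by case: (y i) => /=; rewrite ?expr1n ?expr0n.
Qed.

Lemma card_supp_le (m : mpoly.multinom N) :
  (#|[set i | m i != 0%N]| <= mpoly.mdeg m)%N.
Proof.
rewrite mpoly.mdegE -sum1_card.
apply: (@leq_trans (\sum_(i in [set i | m i != 0%N]) m i)%N).
  by apply: leq_sum => i; rewrite inE lt0n.
rewrite [X in (_ <= X)%N](bigID (fun i => i \in [set i | m i != 0%N])) /=.
exact: leq_addr.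
Qed.

Lemma cf0 f D (A : {set 'I_N}) : deg_le f D -> (D < #|A|)%N -> cf f A = 0.
Proof.
rewrite /deg_le /cf => + hA; elim: (mpoly.msupp f) => [|m s IH] /=.
  by rewrite big_nil.
move=> /andP [hm hs]; rewrite big_cons IH //.
case: ifP => // /eqP hS; exfalso.
have := leq_trans (card_supp_le m) hm; rewrite hS leqNgt hA.
by [].
Qed.
End Poly.
Local Open Scope classical_set_scope.

Section Meas.
Variables (d : measure_display) (T : measurableType d) (R : realType)
  (P : probability T R).

Notation Rint f := (Rintegral P setT f).
Definition intg (h : T -> R) := P.-integrable setT (EFin \o h).
Definition meas (h : T -> R) := measurable_fun setT h.
Definition bnd (h : T -> R) := exists M : R, {ae P, forall w, `|h w| <= M}.

Lemma Rint_one : Rint (fun _ => 1) = 1.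
Proof.
have h : fine (P setT) = 1 :> R by rewrite probability_setT.
by rewrite Rintegral_cst // h mul1r. Qed.

Lemma intD f g : intg f -> intg g -> intg (fun w => f w + g w).
Proof.
move=> hf hg; have := integrableD measurableT hf hg.
by apply: eq_integrable => // w _ /=; rewrite EFinD.
Qed.

Lemma intZ a f : intg f -> intg (fun w => a * f w).
Proof.
move=> hf; have := integrableZl measurableT a hf.
by apply: eq_integrable => // w _ /=; rewrite EFinM.
Qed.

Lemma int_cst c : intg (fun _ => c).
Proof. exact: finite_measure_integrable_cst. Qed.

Lemma int_le_ae h g : meas h -> intg g ->
  {ae P, forall w, `|h w| <= `|g w|} -> intg h.
Proof.
move=> mh /integrableP [mg ig] hle; apply/integrableP; split.
  exact/measurable_EFinP.
apply: le_lt_trans ig; apply: ae_ge0_le_integral => //.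
- by apply: measurableT_comp => //; exact/measurable_EFinP.
- by apply: measurableT_comp.
- by apply: filterS hle => w hw _ /=; rewrite lee_fin.
Qed.

Lemma int_bnd h : meas h -> bnd h -> intg h.
Proof.
move=> mh [M hM]; apply: (int_le_ae (g := fun _ => M)) => //.
  exact: int_cst.
by apply: filterS hM => w hw; apply: le_trans hw (ler_norm _).
Qed.

Lemma Rint_ae_ge0 h : intg h -> {ae P, forall w, 0 <= h w} -> 0 <= Rint h.
Proof.
move=> ih hae; rewrite /Rintegral.
have /integrableP [mh _] := ih.
have mh' : measurable_fun setT h by apply/measurable_EFinP.
rewrite (ae_eq_integral (fun w => (`|h w|)%:E)) //.
- by apply: fine_ge0; apply: integral_ge0 => w _; rewrite lee_fin normr_ge0.
- by apply/measurable_EFinP; apply: measurableT_comp.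
- by apply: filterS hae => w hw _ /=; rewrite ger0_norm.
Qed.

Lemma Rint_ae_le f g : intg f -> intg g -> {ae P, forall w, f w <= g w} ->
  Rint f <= Rint g.
Proof.
move=> hf hg hle; rewrite -subr_ge0 -RintegralB //.
apply: Rint_ae_ge0.
  by have := intD hg (intZ (-1) hf); apply: eq_integrable => // w _ /=; rewrite mulN1r.
by apply: filterS hle => w; rewrite subr_ge0.
Qed.

Lemma Rint_lin (I : Type) (r : seq I) (Pr : pred I) (a : I -> R)
  (h : I -> T -> R) : (forall i, Pr i -> intg (h i)) ->
  intg (fun w => \sum_(i <- r | Pr i) a i * h i w) /\
  Rint (fun w => \sum_(i <- r | Pr i) a i * h i w) =
  \sum_(i <- r | Pr i) a i * Rint (h i).
Proof.
move=> hi; elim: r => [|i r [IH1 IH2]].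
  under eq_Rintegral do rewrite big_nil.
  rewrite big_nil; split; last by rewrite Rintegral_cst // mul0r.
  by have := int_cst 0; apply: eq_integrable => // w _ /=; rewrite big_nil.
have E : (fun w => \sum_(j <- i :: r | Pr j) a j * h j w) =
  (fun w => (if Pr i then a i * h i w else 0) + \sum_(j <- r | Pr j) a j * h j w).
  by apply: funext => w; rewrite big_cons; case: ifP; rewrite ?add0r.
rewrite E big_cons; case: ifP => Pri.
  have hii := intZ (a i) (hi i Pri).
  split; first exact: intD.
  by rewrite RintegralD // RintegralZl // ?IH2 //; exact: hi.
under eq_Rintegral do rewrite add0r.
split => //; move: IH1; apply: eq_integrable => // w _ /=; by rewrite ?add0r.
Qed.

Lemma Rint_sq_le Z : intg Z -> intg (fun w => Z w ^+ 2) ->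
  Rint Z ^+ 2 <= Rint (fun w => Z w ^+ 2).
Proof.
move=> hZ hZ2; set m := Rint Z.
have h1 : fine (P setT) = 1 :> R by rewrite probability_setT.
have h0 : 0 <= Rint (fun w => (Z w - m) ^+ 2).
  by apply: Rintegral_ge0 => w _; rewrite sqr_ge0.
have E : Rint (fun w => (Z w - m) ^+ 2) =
         Rint (fun w => Z w ^+ 2) + (- (2 * m)) * m + m ^+ 2.
  have -> : Rint (fun w => (Z w - m) ^+ 2) =
     Rint (fun w => (Z w ^+ 2 + (- (2 * m)) * Z w) + m ^+ 2).
    by apply: eq_Rintegral => w _; ring.
  rewrite RintegralD //; last exact: int_cst.
    rewrite RintegralD //; last exact: intZ.
    by rewrite RintegralZl // Rintegral_cst // h1 mulr1.
  exact: intD (intZ _ hZ).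
rewrite E in h0; nra.
Qed.

End Meas.

Section Pt.
Variables (R : realType) (N : nat).

Lemma ptwise (k c : {set 'I_N} -> R) (D : nat) (tau0 tau1 : R) (v : 'I_N -> R) :
 0 < tau0 -> tau1 < 1 -> (forall i, tau0 <= v i <= tau1) ->
 (forall A : {set 'I_N}, (D < #|A|)%N -> c A = 0) ->
 (\sum_(B : {set 'I_N}) k B * gcoef c B v) ^+ 2 <=
 (\sum_(B : {set 'I_N} | (#|B| <= D)%N) k B ^+ 2 / (tau0 * (1 - tau1)) ^+ #|B|) *
 \sum_(J : {set 'I_N}) gcoef c J v ^+ 2 * \prod_(i in J) (v i * (1 - v i)).
Proof.
move=> h0 h1 hv c0.
set lam := tau0 * (1 - tau1).
have lam0 : 0 < lam by rewrite /lam mulr_gt0 // subr_gt0.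
have g0 : forall B : {set 'I_N}, (D < #|B|)%N -> gcoef c B v = 0.
  move=> B hB; rewrite /gcoef big1 // => A hBA.
  by rewrite c0 ?mul0r //; exact: leq_trans hB (subset_leq_card hBA).
have eZ : \sum_(B : {set 'I_N}) k B * gcoef c B v =
          \sum_(B : {set 'I_N} | (#|B| <= D)%N) k B * gcoef c B v.
  rewrite (bigID (fun B : {set 'I_N} => (#|B| <= D)%N)) /= [X in _ + X]big1 ?addr0 //.
  by move=> B; rewrite -ltnNge => hB; rewrite g0 // mulr0.
rewrite eZ.
have := @wCS R _ (fun B : {set 'I_N} => (#|B| <= D)%N) k
   (fun B => gcoef c B v) (fun B => lam ^+ #|B|).
move=> /(_ _) hcs; apply: le_trans (hcs _) _.
  by move=> B _; rewrite exprn_gt0.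
apply: ler_wpM2l.
  by apply: sumr_ge0 => B _; rewrite divr_ge0 // ?sqr_ge0 // exprn_ge0 // ltW.
have hP : forall J : {set 'I_N}, 0 <= \prod_(i in J) (v i * (1 - v i)).
  move=> J; apply: prodr_ge0 => i _; have /andP [a b] := hv i; nra.
apply: (@le_trans _ _ (\sum_(B : {set 'I_N} | (#|B| <= D)%N)
      gcoef c B v ^+ 2 * \prod_(i in B) (v i * (1 - v i)))).
  apply: ler_sum => B _; rewrite mulrC; apply: ler_wpM2l; first exact: sqr_ge0.
  exact: lam_bound.
rewrite [X in _ <= X](bigID (fun B : {set 'I_N} => (#|B| <= D)%N)) /= lerDl.
by apply: sumr_ge0 => B _; rewrite mulr_ge0 // sqr_ge0.
Qed.
End Pt.

Section Kap.
Variables (d : measure_display) (T : measurableType d) (R : realType)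
  (P : probability T R) (N : nat) (X : 'I_N -> T -> R) (x : T -> R).
Notation Rint f := (Rintegral P setT f).

Lemma kf_eq n m (A : {set 'I_N}) : (#|A| <= n)%N -> (#|A| <= m)%N ->
  kappa_fuel P X x n A = kappa_fuel P X x m A.
Proof.
elim: n m A => [|n IH] [|m] A //= hn hm.
- rewrite big1 ?subr0 // => B /proper_card; rewrite leqn0 in hn.
  by rewrite (eqP hn) ltn0.
- rewrite big1 ?subr0 // => B /proper_card; rewrite leqn0 in hm.
  by rewrite (eqP hm) ltn0.
- congr (_ - _); apply: eq_bigr => B hB; congr (_ * _); apply: IH.
    by rewrite -ltnS; exact: leq_trans (proper_card hB) hn.
  by rewrite -ltnS; exact: leq_trans (proper_card hB) hm.
Qed.

Lemma kappaE (A : {set 'I_N}) : kappa P X x A =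
  Rint (fun w => x w * Xpow X A w) -
  \sum_(B : {set 'I_N} | B \proper A) kappa P X x B * Rint (Xpow X (A :\: B)).
Proof.
rewrite /kappa; case hA: #|A| => [|n] /=.
  rewrite big1 ?subr0 // => B /proper_card; by rewrite hA ltn0.
congr (_ - _); apply: eq_bigr => B hB; congr (_ * _).
apply: kf_eq => //; have := proper_card hB; by rewrite hA ltnS.
Qed.

Lemma kappa_rec (A : {set 'I_N}) :
  Rint (fun w => x w * Xpow X A w) =
  \sum_(B : {set 'I_N} | B \subset A) kappa P X x B * Rint (Xpow X (A :\: B)).
Proof.
rewrite (bigD1 A) //= finset.setDv.
have -> : Rint (Xpow X finset.set0) = 1.
  rewrite -(Rint_one P); apply: eq_Rintegral => w _.
  by rewrite /Xpow big_set0.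
rewrite mulr1 (eq_bigl (fun B : {set 'I_N} => B \proper A)); last first.
  by move=> B; rewrite finset.properEneq andbC.
by rewrite kappaE subrK.
Qed.
End Kap.

Section Main.
Variables (d : measure_display) (T : measurableType d) (R : realType)
  (P : probability T R) (N : nat) (X : 'I_N -> T -> R) (x : T -> R)
  (tau0 tau1 : R).
Hypotheses (h0 : 0 < tau0) (h1 : tau1 < 1)
  (mX : forall i, measurable_fun setT (X i))
  (hae : {ae P, forall w, forall i, tau0 <= X i w <= tau1})
  (mx : measurable_fun setT x)
  (ix2 : P.-integrable setT (fun w => ((x w) ^+ 2)%:E)).
Notation Rint f := (Rintegral P setT f).

Definition good (h : T -> R) := meas h /\ bnd P h.

Lemma good_cst c : good (fun _ => c).
Proof. by split; [exact: measurable_cst | exists `|c|; apply: aeW]. Qed.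

Lemma good_add f g : good f -> good g -> good (fun w => f w + g w).
Proof.
move=> [mf [M1 b1]] [mg [M2 b2]]; split; first exact: measurable_funD.
exists (M1 + M2); apply: filterS2 b1 b2 => w a b.
by apply: le_trans (ler_normD _ _) _; apply: lerD.
Qed.

Lemma good_mul f g : good f -> good g -> good (fun w => f w * g w).
Proof.
move=> [mf [M1 b1]] [mg [M2 b2]]; split; first exact: measurable_funM.
exists (M1 * M2); apply: filterS2 b1 b2 => w a b.
by rewrite normrM; apply: ler_pM.
Qed.

Lemma good_sum (I : Type) (r : seq I) (Pr : pred I) (h : I -> T -> R) :
  (forall i, Pr i -> good (h i)) -> good (fun w => \sum_(i <- r | Pr i) h i w).
Proof.
move=> hh; elim: r => [|i r IH].
  have -> : (fun w => \sum_(i <- [::] | Pr i) h i w) = (fun _ => 0).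
    by apply: funext => w; rewrite big_nil.
  exact: good_cst.
have -> : (fun w => \sum_(j <- i :: r | Pr j) h j w) =
  (fun w => (if Pr i then h i w else 0) + \sum_(j <- r | Pr j) h j w).
  by apply: funext => w; rewrite big_cons; case: ifP; rewrite ?add0r.
case Pi: (Pr i); apply: good_add => //; [exact: hh | exact: good_cst].
Qed.

Lemma good_prod (I : Type) (r : seq I) (Pr : pred I) (h : I -> T -> R) :
  (forall i, Pr i -> good (h i)) -> good (fun w => \prod_(i <- r | Pr i) h i w).
Proof.
move=> hh; elim: r => [|i r IH].
  have -> : (fun w => \prod_(i <- [::] | Pr i) h i w) = (fun _ => 1).
    by apply: funext => w; rewrite big_nil.
  exact: good_cst.
have -> : (fun w => \prod_(j <- i :: r | Pr j) h j w) =
  (fun w => (if Pr i then h i w else 1) * \prod_(j <- r | Pr j) h j w).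
  by apply: funext => w; rewrite big_cons; case: ifP; rewrite ?mul1r.
case Pi: (Pr i); apply: good_mul => //; [exact: hh | exact: good_cst].
Qed.

Lemma good_X i : good (X i).
Proof.
split; first exact: mX.
exists tau1; apply: filterS hae => w hw; have /andP [a b] := hw i.
by rewrite ger0_norm // (le_trans (ltW h0) a).
Qed.

Lemma good_Xpow (A : {set 'I_N}) : good (Xpow X A).
Proof. rewrite /Xpow; apply: good_prod => i _; exact: good_X. Qed.

Lemma Xpow_le1 (A : {set 'I_N}) : {ae P, forall w, `|Xpow X A w| <= 1}.
Proof.
apply: filterS hae => w hw; rewrite /Xpow normr_prod; apply: prodr_ile1 => i _.
have /andP [a b] := hw i; rewrite normr_ge0 /= ger0_norm ?(le_trans (ltW h0) a) //.
exact: le_trans b (ltW h1).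
Qed.

Lemma int_x : intg P x.
Proof.
apply: (int_le_ae (g := fun w => 1 + x w ^+ 2)) => //.
- apply: intD; first exact: int_cst.
  exact: ix2.
- apply: aeW => w; rewrite [X in _ <= X]ger0_norm; last first.
    by rewrite addr_ge0 // sqr_ge0.
  have e : `|x w| ^+ 2 = x w ^+ 2 by rewrite -normrX ger0_norm ?sqr_ge0.
  have := sqr_ge0 (`|x w| - 1); rewrite -e; nra.
Qed.

Lemma int_xXpow (A : {set 'I_N}) : intg P (fun w => x w * Xpow X A w).
Proof.
apply: (int_le_ae (g := x)).
- by apply: measurable_funM => //; case: (good_Xpow A).
- exact: int_x.
- apply: filterS (Xpow_le1 A) => w hw; rewrite normrM.
  by apply: ler_piMr.
Qed.

Lemma main_c (c : {set 'I_N} -> R) (D : nat) :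
  (forall A : {set 'I_N}, (D < #|A|)%N -> c A = 0) ->
  (jointE P X (fun w y => (\sum_(A : {set 'I_N}) c A * mono A y) * x w)) ^+ 2 <=
  (\sum_(A : {set 'I_N} | (#|A| <= D)%N)
       kappa P X x A ^+ 2 / (tau0 * (1 - tau1)) ^+ #|A|) *
  jointE P X (fun _ y => (\sum_(A : {set 'I_N}) c A * mono A y) ^+ 2).
Proof.
move=> c0.
set K := kappa P X x.
pose g B w := gcoef c B (fun i => X i w).
pose Z w := \sum_(B : {set 'I_N}) K B * g B w.
pose H w := \sum_(J : {set 'I_N}) g J w ^+ 2 * \prod_(i in J) (X i w * (1 - X i w)).
have gg B : good (g B).
  apply: good_sum => A _; apply: good_mul; first exact: good_cst.
  exact: good_Xpow.
have gZ : good Z.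
  by apply: good_sum => B _; apply: good_mul; [exact: good_cst | exact: gg].
have gZ2 : good (fun w => Z w ^+ 2).
  have -> : (fun w => Z w ^+ 2) = (fun w => Z w * Z w).
    by apply: funext => w; rewrite expr2.
  exact: good_mul.
have gH : good H.
  apply: good_sum => J _; apply: good_mul.
    have -> : (fun w => g J w ^+ 2) = (fun w => g J w * g J w).
      by apply: funext => w; rewrite expr2.
    exact: good_mul.
  apply: good_prod => i _; apply: good_mul; first exact: good_X.
  have -> : (fun w => 1 - X i w) = (fun w => 1 + (-1) * X i w).
    by apply: funext => w; rewrite mulN1r.
  by apply: good_add; [exact: good_cst | apply: good_mul; [exact: good_cst | exact: good_X]].
have iZ := int_bnd (proj1 gZ) (proj2 gZ).
have iZ2 := int_bnd (proj1 gZ2) (proj2 gZ2).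
have iH := int_bnd (proj1 gH) (proj2 gH).
have ig B := int_bnd (proj1 (gg B)) (proj2 (gg B)).
have iXp A := int_bnd (proj1 (good_Xpow A)) (proj2 (good_Xpow A)).
have EZ : jointE P X (fun w y => (\sum_(A : {set 'I_N}) c A * mono A y) * x w)
          = Rint Z.
  have E1 : jointE P X (fun w y => (\sum_(A : {set 'I_N}) c A * mono A y) * x w)
     = Rint (fun w => \sum_(A : {set 'I_N}) c A * (x w * Xpow X A w)).
    rewrite /jointE; apply: eq_Rintegral => w _.
    transitivity (x w * \sum_(y : {ffun 'I_N -> bool})
        bern_weight (fun i => X i w) y * (\sum_(A : {set 'I_N}) c A * mono A y)).
      by rewrite mulr_sumr; apply: eq_bigr => y _; ring.
    rewrite cond_F mulr_sumr; apply: eq_bigr => A _; rewrite /Xpow /vpow; ring.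
  rewrite E1 (Rint_lin (P := P) (Pr := xpredT) _ c (fun A _ => int_xXpow A)).2.
  under eq_bigr do rewrite kappa_rec mulr_sumr.
  rewrite (exchange_big_dep xpredT) //=.
  transitivity (\sum_(B : {set 'I_N}) K B * Rint (g B)).
    apply: eq_bigr => B _.
    rewrite /g /gcoef.
    have := (Rint_lin (P := P) (Pr := fun A : {set 'I_N} => B \subset A)
               (h := fun A => Xpow X (A :\: B)) (index_enum _) c (fun A _ => iXp (A :\: B))).2.
    rewrite /Xpow /vpow => ->; rewrite mulr_sumr; apply: eq_bigr => A _; rewrite /K; ring.
  by rewrite -(Rint_lin (P := P) (Pr := xpredT) (h := g) (index_enum _) K (fun B _ => ig B)).2.
have EH : jointE P X (fun _ y => (\sum_(A : {set 'I_N}) c A * mono A y) ^+ 2)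
          = Rint H.
  rewrite /jointE; apply: eq_Rintegral => w _.
  rewrite -(cond_F2 c (fun i => X i w)); apply: eq_bigr => y _; by rewrite mulrC.
rewrite EZ EH.
apply: le_trans (Rint_sq_le iZ iZ2) _.
rewrite -RintegralZl //.
apply: Rint_ae_le => //; first exact: intZ.
apply: filterS hae => w hw.
exact: (@ptwise R N K c D tau0 tau1 (fun i => X i w) h0 h1 hw c0).
Qed.
End Main.

Unset Implicit Arguments.
Theorem mainTheorem3 (d : measure_display) (T : measurableType d) (R : realType)
    (P : probability T R) (N : nat) (X : 'I_N -> T -> R) (x : T -> R)
    (tau0 tau1 : R) (D : nat) :
  0 < tau0 -> tau0 <= tau1 -> tau1 < 1 ->
  (forall i, measurable_fun setT (X i)) ->
  {ae P, forall w, forall i, tau0 <= X i w <= tau1} ->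
  (exists g : ('I_N -> R) -> R, x = (fun w => g (fun i => X i w))) ->
  measurable_fun setT x ->
  P.-integrable setT (fun w => ((x w) ^+ 2)%:E) ->
  Corr_le P X x D ^+ 2 <=
    \sum_(A : {set 'I_N} | (#|A| <= D)%N)
       kappa P X x A ^+ 2 / (tau0 * (1 - tau1)) ^+ #|A|.
Proof.
move=> h0 h01 h1 mX hae _ mx ix2.
set S := (\sum_(A : {set 'I_N} | (#|A| <= D)%N) _).
have lam0 : 0 < tau0 * (1 - tau1) by rewrite mulr_gt0 // subr_gt0.
have S0 : 0 <= S.
  by apply: sumr_ge0 => A _; rewrite divr_ge0 ?sqr_ge0 // exprn_ge0 // ltW.
rewrite /Corr_le; set Es := (E0 in sup E0).
have key : forall r, Es r -> r ^+ 2 <= S.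
  move=> r [f [hdeg hne ->]].
  have e1 : jointE P X (fun w y => evalY f y * x w) =
     jointE P X (fun w y => (\sum_(A : {set 'I_N}) cf f A * mono A y) * x w).
    by rewrite /jointE; apply: eq_Rintegral => w _; apply: eq_bigr => y _;
      rewrite evalY_cf.
  have e2 : jointE P X (fun _ y => evalY f y ^+ 2) =
     jointE P X (fun _ y => (\sum_(A : {set 'I_N}) cf f A * mono A y) ^+ 2).
    by rewrite /jointE; apply: eq_Rintegral => w _; apply: eq_bigr => y _;
      rewrite evalY_cf.
  have hm := main_c h0 h1 mX hae mx ix2 (fun A hA => cf0 hdeg hA).
  rewrite e1 e2 in hne *; move: hm hne.
  move: (jointE P X _) (jointE P X _) => Q E hm hne.
  have [hQ|hQ'] := boolP (Q <= 0).
    have -> : Num.sqrt Q = 0 by apply/eqP; rewrite sqrtr_eq0.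
    by rewrite invr0 mulr0 expr0n.
  have hQ : 0 < Q by rewrite ltNge.
  by rewrite exprMn exprVn (sqr_sqrtr (ltW hQ)) ler_pdivrMr // mulrC.
have [[r0 Er0]|Hne] := pselect (exists r, Es r).
  have ub : ubound Es (Num.sqrt S).
    move=> r Er; apply: le_trans (ler_norm r) _.
    by rewrite -sqrtr_sqr ler_sqrt // key.
  have hs1 : sup Es <= Num.sqrt S by apply: ge_sup => //; exists r0.
  have hub : has_ubound Es by exists (Num.sqrt S).
  have hs2 : r0 <= sup Es by apply: (ub_le_sup hub).
  have hr0 : - Num.sqrt S <= r0.
    have := key r0 Er0; rewrite -(ler_sqrt _ S0) sqrtr_sqr => /ler_normlP [].
    by rewrite lerNl.
  rewrite -(sqr_sqrtr S0).
  have := sqrtr_ge0 S; nra.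
have -> : Es = set0.
  by apply/seteqP; split => r // Er; exfalso; apply: Hne; exists r.
by rewrite sup0 expr0n.
Qed.
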